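(* Let $0<\epsilon<1$ and let $a_i = 2i$ for $i\in\{1,\dots,8\}$. Consider the simple one-layer GNN with real parameters $w_2, W_{11}, W_{12}, b_1, b_2$ defined below, and the training inputs $$\mathscr H_{\mathrm{small}}=\{P^{(0)}_1(a_i): i=1,\dots,4\}\cup\{P^{(1)}_2(a_i,0): i=5,\dots,8\}.$$ Suppose that for every $G\in\mathscr H_{\mathrm{small}}$ and every node $u\in V(G)$ we have $|h^{(1)}_u(G)-x_u(\Gamma(G))|<\epsilon/20$. Then: (i) $|w_2W_{11}-1|+|w_2W_{12}-1|<\epsilon$ and $|w_2b_1+b_2|<20\epsilon$; (ii) $w_2\ge 0$, $W_{11}\ge 0$, $W_{12}\ge 0$; (iii) for every $G\in\mathscr G$ and every $v\in V(G)$, $$(1-\epsilon)\,x_v(\Gamma(G))-\epsilon\;\le\; h^{(1)}_v(G)\;\le\;(1+\epsilon)\,x_v(\Gamma(G))+\epsilon .$$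
   Context: Attributed graphs: $G=(V,E,X_{\mathrm v},X_{\mathrm e})$ with $V$ finite, $E$ a set of undirected edges, nonnegative edge weights $x_{(u,v)}=x_{(v,u)}\ge 0$ and nonnegative real node features $x_v$. Every node carries a self-loop of weight $x_{(v,v)}=0$, and the neighbourhood is $\mathcal N(v)=\{v\}\cup\{u:\{u,v\}\in E\}$. A constant $\beta>0$ is fixed (it encodes ''infinite distance''); $\mathscr G$ is the set of attributed graphs with $\sum_{e\in E}x_e<\beta$. For a graph $H$, $x_v(H)$ denotes the feature of node $v$ in $H$. The Bellman–Ford operator $\Gamma$ sends $G$ to the graph $\Gamma(G)$ with the same vertices, edges and edge weights and node features $x'_v=\min\{x_u+x_{(u,v)}:u\in\mathcal N(v)\}$. Shortest-path instances: for a source $s$, $\mathrm d^{(t)}(s,v)$ is the minimal total weight of a walk from $s$ to $v$ with at most $t$ edges, and equals $\beta$ if no such walk exists. $P^{(t)}_k(a_1,\dots,a_k)$ is the path graph with vertices $v_0,\dots,v_k$, edges $\{v_{i-1},v_i\}$ of weight $a_i$, and node features $x_{v_i}=\mathrm d^{(t)}(v_0,v_i)$ (so $x_{v_0}=0$). Simple one-layer GNN: with $\sigma(z)=\max(z,0)$ and parameters $w_2,W_{11},W_{12},b_1,b_2\in\mathbb R$, it outputs at each node $v$ $$h^{(1)}_v(G)=\sigma\Big(w_2\min_{u\in\mathcal N(v)}\sigma\big(W_{11}x_u+W_{12}x_{(u,v)}+b_1\big)+b_2\Big).$$ *)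

(* Defs.v *)
From mathcomp Require Import all_boot all_order all_algebra.
Set Implicit Arguments. Unset Strict Implicit. Unset Printing Implicit Defensive.
Import Order.TTheory GRing.Theory Num.Theory.
Local Open Scope ring_scope.

Record graph (R : realFieldType) := Graph {
  V : finType;
  E : {set {set V}};
  xe : {set V} -> R;
  xv : V -> R }.
Arguments Graph {R} V E xe xv.

Section Defs.
Variable R : realFieldType.

(* edge weight x_(u,v); the self-loop (v,v) has weight 0 *)
Definition ew_of (T : finType) (xe : {set T} -> R) (u v : T) : R :=
  if u == v then 0 else xe [set u; v].
Definition ew (G : graph R) (u v : V G) : R := ew_of (@xe R G) u v.

Definition nbhd (G : graph R) (v : V G) : {set V G} :=
  [set u | (u == v) || ([set u; v] \in E G)].

(* minimum of f over N(v) (nonempty since v ∈ N(v)); starting the fold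
   at f v, an element of the set, gives exactly the minimum *)
Definition minN (G : graph R) (v : V G) (f : V G -> R) : R :=
  \big[Num.min/f v]_(u in nbhd v) f u.

Definition attributed (G : graph R) : Prop :=
  [/\ (forall e, e \in E G -> #|e| = 2%N),
      (forall e, e \in E G -> 0 <= @xe R G e) &
      (forall v, 0 <= @xv R G v)].

Definition inGG (beta : R) (G : graph R) : Prop :=
  attributed G /\ \sum_(e in E G) @xe R G e < beta.

Definition Gamma (G : graph R) : graph R :=
  Graph (V G) (E G) (@xe R G) (fun v => minN v (fun u => @xv R G u + ew u v)).

Definition relu (z : R) : R := Num.max z 0.
Definition gnn (w2 W11 W12 b1 b2 : R) (G : graph R) (v : V G) : R :=
  relu (w2 * minN v (fun u => relu (W11 * @xv R G u + W12 * ew u v + b1)) + b2).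

(* Walks: a walk with n edges from s is a sequence p of n vertices with
   consecutive vertices joined by an edge of E; it ends at last s p. *)
Section Walks.
Variables (T : finType) (Ed : {set {set T}}) (xed : {set T} -> R).

Definition walks_upto (t : nat) : seq (seq T) :=
  flatten [seq [seq tval p | p : n.-tuple T] | n <- iota 0 t.+1].

Definition is_walk (s v : T) (p : seq T) : bool :=
  path (fun a b => [set a; b] \in Ed) s p && (last s p == v).

Definition walk_weight (s : T) (p : seq T) : R :=
  \sum_(ab <- zip (s :: p) p) ew_of xed ab.1 ab.2.

(* d^(t)(s,v): minimal weight of a walk from s to v with at most t edges,
   and β if no such walk exists *)
Definition dist (beta : R) (t : nat) (s v : T) : R :=
  let ws := [seq walk_weight s p | p <- walks_upto t & is_walk s v p] in
  if ws is w0 :: _ then \big[Num.min/w0]_(w <- ws) w else beta.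
End Walks.

(* Path graph P^(t)_k(a_1,...,a_k): vertices v_0..v_k (as 'I_k.+1), edges
   {v_(i-1), v_i} with weight a_i (here a is given as a sequence, a_i = nth 0 a (i-1)),
   node features x_(v_i) = d^(t)(v_0, v_i). *)
Definition path_edges (k : nat) : {set {set 'I_k.+1}} :=
  [set [set (inord i : 'I_k.+1); inord i.+1] | i : 'I_k].
Definition path_xe (k : nat) (a : seq R) (e : {set 'I_k.+1}) : R :=
  \sum_(i < k | e == [set (inord i : 'I_k.+1); inord i.+1]) nth 0 a i.
Definition Ppath (beta : R) (t k : nat) (a : seq R) : graph R :=
  Graph 'I_k.+1 (path_edges k) (@path_xe k a)
        (fun i => dist (path_edges k) (@path_xe k a) beta t ord0 i).

Definition Hsmall1 (beta : R) (i : nat) : graph R := Ppath beta 0 1 [:: (2 * i)%:R].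
Definition Hsmall2 (beta : R) (i : nat) : graph R := Ppath beta 1 2 [:: (2 * i)%:R; 0].

Definition fits (eps w2 W11 W12 b1 b2 : R) (G : graph R) : Prop :=
  forall u : V G, `|gnn w2 W11 W12 b1 b2 u - @xv R (Gamma G) u| < eps / 20%:R.
End Defs.

(* Main.v *)
Require Import Defs.
From mathcomp Require Import all_boot all_order all_algebra.
From mathcomp Require Import ring lra zify.
Set Implicit Arguments. Unset Strict Implicit. Unset Printing Implicit Defensive.
Import Order.TTheory GRing.Theory Num.Theory.
Local Open Scope ring_scope.

Section W.
Variable T : finType.
Lemma walks_size (t : nat) (p : seq T) : p \in walks_upto T t -> (size p <= t)%N.
Proof.
rewrite /walks_upto => /flattenP [s /mapP [n]].
rewrite mem_iota add0n => /andP [_ Hn] -> /imageP [q _ ->].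
by rewrite size_tuple -ltnS.
Qed.
Lemma walks_in (t : nat) (p : seq T) : (size p <= t)%N -> p \in walks_upto T t.
Proof.
move=> Hs; apply/flattenP; exists [seq tval q | q : (size p).-tuple T].
  by apply/mapP; exists (size p) => //; rewrite mem_iota add0n ltnS.
apply/imageP. by exists (in_tuple p).
Qed.
End W.
Section M.
Variable R : realFieldType.
Lemma bigmin_seq_le (I : eqType) (s : seq I) (x0 : R) F u :
  u \in s -> \big[Num.min/x0]_(i <- s) F i <= F u.
Proof.
elim: s => // a s IH; rewrite inE big_cons ge_min => /orP [/eqP ->|H].
  by rewrite lexx.
by rewrite IH ?orbT.
Qed.
Lemma bigmin_seq_ex (I : eqType) (s : seq I) (x0 : R) F :
  \big[Num.min/x0]_(i <- s) F i = x0 \/ exists2 u, u \in s & \big[Num.min/x0]_(i <- s) F i = F u.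
Proof.
elim: s => [|a s IH]; first by left; rewrite big_nil.
rewrite big_cons /Order.min; case: ifP => h.
  by right; exists a; rewrite ?inE ?eqxx.
case: IH => [->|[u Hu ->]]; first by left.
by right; exists u; rewrite // inE Hu orbT.
Qed.
Lemma bigmin_le (I : finType) (A : {pred I}) (x0 : R) F u :
  u \in A -> \big[Num.min/x0]_(i in A) F i <= F u.
Proof.
move=> Hu; rewrite -big_filter; apply: bigmin_seq_le.
by rewrite mem_filter Hu mem_index_enum.
Qed.
Lemma bigmin_ex (I : finType) (A : {pred I}) (x0 : R) F :
  \big[Num.min/x0]_(i in A) F i = x0 \/ exists2 u, u \in A & \big[Num.min/x0]_(i in A) F i = F u.
Proof.
rewrite -big_filter; case: (bigmin_seq_ex (filter (mem A) (index_enum I)) x0 F) => [->|[u]]; first by left.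
by rewrite mem_filter => /andP [Hu _] ->; right; exists u.
Qed.

Lemma nbhd_self (G : graph R) (v : V G) : v \in nbhd v.
Proof. by rewrite inE eqxx. Qed.

Lemma minN_le (G : graph R) (v : V G) f u : u \in nbhd v -> minN v f <= f u.
Proof. exact: bigmin_le. Qed.
Lemma minN_ex (G : graph R) (v : V G) f : exists2 u, u \in nbhd v & minN v f = f u.
Proof.
rewrite /minN; case: (bigmin_ex (nbhd v) (f v) f) => [->|//].
by exists v; rewrite ?nbhd_self.
Qed.
Lemma minN_2 (G : graph R) (v : V G) f a b : a \in nbhd v -> b \in nbhd v ->
  (forall u, u \in nbhd v -> u = a \/ u = b) -> minN v f = Num.min (f a) (f b).
Proof.
move=> Ha Hb H; have Ea := minN_le f Ha; have Eb := minN_le f Hb.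
have [u Hu E] := minN_ex v f; rewrite E in Ea Eb *.
apply/eqP; rewrite eq_le le_min Ea Eb /=.
by case: (H u Hu) => ->; rewrite ge_min lexx ?orbT.
Qed.
End M.
Lemma set2_eq (T : finType) (a b c d : T) : [set a; b] = [set c; d] ->
  [/\ a = c \/ a = d, b = c \/ b = d, c = a \/ c = b & d = a \/ d = b].
Proof.
move=> E; split; apply/set2P; by rewrite ?E ?set21 ?set22 // -?E ?set21 ?set22.
Qed.

Lemma val_inord k (i : nat) : (i <= k)%N -> val (inord i : 'I_k.+1) = i.
Proof. by move=> H; rewrite /= inordK. Qed.

Lemma path_edgeP k (u v : 'I_k.+1) :
  ([set u; v] \in path_edges k) = ((u.+1 == v :> nat) || (v.+1 == u :> nat)).
Proof.
apply/imsetP/idP.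
  case=> i _ /set2_eq [H1 H2 H3 H4].
  have Hi := ltn_ord i.
  have E0 : val (inord i : 'I_k.+1) = i by rewrite val_inord // ltnW.
  have E1 : val (inord i.+1 : 'I_k.+1) = i.+1 by rewrite val_inord.
  case: H1 => /(congr1 val); rewrite ?E0 ?E1 => H1;
  case: H2 => /(congr1 val); rewrite ?E0 ?E1 => H2;
  case: H3 => /(congr1 val); rewrite ?E0 ?E1 => H3;
  case: H4 => /(congr1 val); rewrite ?E0 ?E1 => H4; apply/orP; simpl in *; lia.
move/orP=> [/eqP H|/eqP H].
  have Hu : (u < k)%N by rewrite -ltnS H ltn_ord.
  exists (Ordinal Hu) => //=; congr [set _; _]; apply/val_inj; rewrite val_inord //.
  exact: ltnW.
have Hv : (v < k)%N by rewrite -ltnS H ltn_ord.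
exists (Ordinal Hv) => //=; rewrite setUC; congr [set _; _]; apply/val_inj; rewrite val_inord //.
exact: ltnW.
Qed.

Lemma path_xe_edge (R : realFieldType) k (a : seq R) (i : nat) : (i < k)%N ->
  path_xe a [set (inord i : 'I_k.+1); inord i.+1] = nth 0 a i.
Proof.
move=> Hi; rewrite /path_xe (bigD1 (Ordinal Hi)) ?eqxx //= big1 ?addr0 //.
move=> j /andP [/eqP /set2_eq [H1 H2 _ _] Hne]; exfalso.
have Hj := ltn_ord j; move/eqP: Hne => Hne; apply: Hne; apply/val_inj => /=.
have E0 : forall m, (m <= k)%N -> val (inord m : 'I_k.+1) = m by move=> m; exact: val_inord.
case: H1 => /(congr1 val); rewrite !E0 //; try lia => H1;
case: H2 => /(congr1 val); rewrite !E0 //; simpl in *; lia.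
Qed.

Section Dist.
Variables (R : realFieldType) (T : finType) (Ed : {set {set T}}) (xed : {set T} -> R).
Lemma dist_all beta t s v c :
  (exists p, p \in walks_upto T t /\ is_walk Ed s v p) ->
  (forall p, p \in walks_upto T t -> is_walk Ed s v p -> walk_weight xed s p = c) ->
  dist Ed xed beta t s v = c.
Proof.
move=> [p0 [Hp0 Hw0]] Hall; rewrite /dist.
set ws := [seq walk_weight xed s p | p <- walks_upto T t & is_walk Ed s v p].
have Hws : forall w, w \in ws -> w = c.
  by move=> w /mapP [p]; rewrite mem_filter => /andP [Hw Hp] ->; apply: Hall.
have Hin : walk_weight xed s p0 \in ws by apply/mapP; exists p0; rewrite // mem_filter Hw0.
case E: ws Hws Hin => [|w0 ws'] // Hws _.
rewrite big_seq; apply: (big_ind (fun x => x = c)).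
- by apply: Hws; rewrite inE eqxx.
- by move=> x y -> ->; rewrite /Order.min; case: ifP.
- by move=> w; apply: Hws.
Qed.
Lemma dist_none beta t s v :
  (forall p, p \in walks_upto T t -> ~~ is_walk Ed s v p) ->
  dist Ed xed beta t s v = beta.
Proof.
move=> H; rewrite /dist.
have -> : [seq p <- walks_upto T t | is_walk Ed s v p] = [::].
  apply/eqP; rewrite -size_eq0 size_filter -leqn0 leqNgt -has_count.
  by apply/hasPn => p Hp; apply: H.
by [].
Qed.
Lemma walk_weight1 s u : walk_weight xed s [:: u] = ew_of xed s u.
Proof. by rewrite /walk_weight /= big_cons big_nil addr0. Qed.
End Dist.

Lemma size0P (T : Type) (p : seq T) : (size p <= 0)%N -> p = [::].
Proof. by case: p. Qed.
Lemma size1P (T : Type) (p : seq T) : (size p <= 1)%N -> p = [::] \/ exists u, p = [:: u].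
Proof. by case: p => [|u [|]]; [left|right; exists u|]. Qed.

Lemma ord0_inord k : (ord0 : 'I_k.+1) = inord 0.
Proof. by apply/val_inj; rewrite val_inord. Qed.

Section Graphs.
Variable R : realFieldType.
Implicit Types (beta : R).

Lemma H1_x0 beta i : @xv R (Hsmall1 beta i) (inord 0 : 'I_2) = 0.
Proof.
rewrite /= -ord0_inord; apply: dist_all.
  by exists [::]; rewrite walks_in //= /is_walk /= eqxx.
by move=> p /walks_size /size0P -> _; rewrite /walk_weight /= big_nil.
Qed.

Lemma H1_x1 beta i : @xv R (Hsmall1 beta i) (inord 1 : 'I_2) = beta.
Proof.
rewrite /=; apply: dist_none.
move=> p /walks_size /size0P ->; rewrite /is_walk /=.
by rewrite -val_eqE /= val_inord.
Qed.

Lemma H2_x1 beta i : @xv R (Hsmall2 beta i) (inord 1 : 'I_3) = (2 * i)%:R.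
Proof.
rewrite /= ord0_inord; apply: dist_all.
  exists [:: inord 1]; rewrite walks_in //= /is_walk /= eqxx path_edgeP.
  by rewrite !val_inord.
move=> p /walks_size /size1P [->|[u ->]]; rewrite /is_walk /=.
  by rewrite -val_eqE /= !val_inord.
rewrite andbT => /andP [_ /eqP ->]; rewrite walk_weight1 /ew_of.
by rewrite -val_eqE /= !val_inord // path_xe_edge.
Qed.

Lemma H2_x2 beta i : @xv R (Hsmall2 beta i) (inord 2 : 'I_3) = beta.
Proof.
rewrite /= ord0_inord; apply: dist_none.
move=> p /walks_size /size1P [->|[u ->]]; rewrite /is_walk /=.
  by rewrite -val_eqE /= !val_inord.
rewrite andbT path_edgeP; apply/negP => /andP [H /eqP E]; move: H; rewrite E.
by rewrite !val_inord.
Qed.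
End Graphs.

Section Graphs2.
Variable R : realFieldType.
Implicit Types (beta : R).

Lemma Gamma_xv (G : graph R) (v : V G) : @xv R (Gamma G) v = minN v (fun u => @xv R G u + ew u v).
Proof. by []. Qed.
Lemma ew_self (G : graph R) (v : V G) : ew v v = 0.
Proof. by rewrite /ew /ew_of eqxx. Qed.

Lemma H1_ew beta i : @ew R (Hsmall1 beta i) (inord 0 : 'I_2) (inord 1) = (2 * i)%:R.
Proof.
rewrite /ew /ew_of -val_eqE /= !val_inord //=.
by rewrite (@path_xe_edge R 1 _ 0).
Qed.
Lemma H2_ew beta i : @ew R (Hsmall2 beta i) (inord 1 : 'I_3) (inord 2) = 0.
Proof.
rewrite /ew /ew_of -val_eqE /= !val_inord //=.
by rewrite (@path_xe_edge R 2 _ 1).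
Qed.
Lemma H2_ew01 beta i : @xe R (Hsmall2 beta i) [set (inord 0 : 'I_3); inord 1] = (2 * i)%:R.
Proof. by rewrite /= (@path_xe_edge R 2 _ 0). Qed.

Lemma H1_nb beta i f :
  @minN R (Hsmall1 beta i) (inord 1 : 'I_2) f = Num.min (f (inord 0)) (f (inord 1)).
Proof.
apply: minN_2; rewrite ?nbhd_self //.
  by rewrite inE path_edgeP !val_inord // eqxx !orbT.
move=> [[|[|n]] Hn] _; [left|right|by []]; apply/val_inj; rewrite val_inord //.
Qed.

Lemma H2_nb beta i f :
  @minN R (Hsmall2 beta i) (inord 2 : 'I_3) f = Num.min (f (inord 1)) (f (inord 2)).
Proof.
apply: minN_2; rewrite ?nbhd_self //.
  by rewrite inE path_edgeP !val_inord // eqxx !orbT.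
move=> [[|[|[|n]]] Hn] //; rewrite inE.
- by rewrite -val_eqE path_edgeP /= !val_inord.
- by left; apply/val_inj; rewrite val_inord.
- by right; apply/val_inj; rewrite val_inord.
Qed.

Lemma gnn_def w2 W11 W12 b1 b2 (G : graph R) (v : V G) : gnn w2 W11 W12 b1 b2 v =
  relu (w2 * minN v (fun u => relu (W11 * @xv R G u + W12 * ew u v + b1)) + b2).
Proof. by []. Qed.

Lemma H1_v1 beta i w2 W11 W12 b1 b2 :
  @gnn R w2 W11 W12 b1 b2 (Hsmall1 beta i) (inord 1) =
    relu (w2 * Num.min (relu (W12 * (2*i)%:R + b1)) (relu (W11 * beta + b1)) + b2)
  /\ @xv R (Gamma (Hsmall1 beta i)) (inord 1) = Num.min ((2*i)%:R) beta.
Proof.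
rewrite gnn_def Gamma_xv !H1_nb !H1_x0 !H1_x1 H1_ew !ew_self.
by rewrite !mulr0 !addr0 ?mul0r ?add0r.
Qed.

Lemma H2_v2 beta i w2 W11 W12 b1 b2 :
  @gnn R w2 W11 W12 b1 b2 (Hsmall2 beta i) (inord 2) =
    relu (w2 * Num.min (relu (W11 * (2*i)%:R + b1)) (relu (W11 * beta + b1)) + b2)
  /\ @xv R (Gamma (Hsmall2 beta i)) (inord 2) = Num.min ((2*i)%:R) beta.
Proof.
rewrite gnn_def Gamma_xv !H2_nb !H2_x1 !H2_x2 H2_ew !ew_self.
by rewrite !mulr0 !addr0.
Qed.

Lemma H1_v0 beta i w2 W11 W12 b1 b2 :
  0 <= w2 -> b2 <= @gnn R w2 W11 W12 b1 b2 (Hsmall1 beta i) (inord 0) /\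
  @xv R (Gamma (Hsmall1 beta i)) (inord 0) <= 0.
Proof.
move=> Hw; split.
  rewrite gnn_def /relu le_max; apply/orP; left.
  rewrite lerDr; apply: mulr_ge0 => //.
  have [u _ ->] := minN_ex (inord 0 : V (Hsmall1 beta i)) (fun u => relu (W11 * @xv R (Hsmall1 beta i) u + W12 * ew u (inord 0) + b1)).
  by rewrite /relu le_max lexx orbT.
rewrite Gamma_xv; apply: le_trans (minN_le _ (nbhd_self _)) _.
by rewrite H1_x0 ew_self addr0.
Qed.
End Graphs2.

Section S6.
Lemma pick4 (R : realFieldType) (g : R -> R) (c d a : R) (m1 m2 m3 m4 : R) (P1 P2 P3 P4 : Prop) :
  0 < d -> d < 1 ->
  a - d < g m1 -> g m1 < a + d ->
  a + 2 - d < g m2 -> g m2 < a + 2 + d ->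
  a + 4 - d < g m3 -> g m3 < a + 4 + d ->
  a + 6 - d < g m4 -> g m4 < a + 6 + d ->
  m1 = 0 \/ m1 = c \/ P1 -> m2 = 0 \/ m2 = c \/ P2 ->
  m3 = 0 \/ m3 = c \/ P3 -> m4 = 0 \/ m4 = c \/ P4 ->
  (P1 /\ P2) \/ (P1 /\ P3) \/ (P1 /\ P4) \/ (P2 /\ P3) \/ (P2 /\ P4) \/ (P3 /\ P4).
Proof.
move=> H0 H1 A1 B1 A2 B2 A3 B3 A4 B4 C1 C2 C3 C4.
case: C1 => [?|[?|?]]; case: C2 => [?|[?|?]]; case: C3 => [?|[?|?]]; case: C4 => [?|[?|?]];
subst; try tauto; exfalso; lra.
Qed.

Lemma signA (R : realFieldType) (w2 W11 W12 b1 d beta ak al : R): 0 < d -> d < 1/20 -> 16 < beta -> 2 <= ak -> ak + 2 <= al -> al <= 8 ->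
  0 <= W12*ak + b1 -> W12*ak + b1 <= Num.max (W11*beta+b1) 0 -> 0 <= W12*al + b1 ->
  1 - d < w2*W12 -> w2*W12 < 1 + d -> 1 - d < w2*W11 -> 0 <= w2.
Proof.
move=> Hd Hd1 Hb Ha Hal Hal8 Hz1 Hzc Hz2 Hp1 Hp2 Hq; rewrite leNgt; apply/negP => Hw.
have HW : W12 < 0 by nra.
have Hz : 0 < W12*ak + b1 by nra.
have Hc : W12*ak + b1 <= W11*beta + b1.
  move: Hzc; rewrite /Num.max /Order.max; case: ifP => // _ H; lra.
have H2 : w2 * (W11 * beta) <= w2 * (W12 * ak) by rewrite ler_wnM2l ?(ltW Hw) //; lra.
rewrite !mulrA in H2.
have H3 : 0 <= (w2 * W11 - 1/2) * beta by apply: mulr_ge0; lra.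
nra.
Qed.
End S6.
Section C. Variable R : realFieldType.
Lemma relu_id (y : R) : 0 <= y -> relu y = y.
Proof. by move=> H; rewrite /relu /Num.max /Order.max; case: ifP => // H'; lra. Qed.
Lemma relu_neg (y : R) : y <= 0 -> relu y = 0.
Proof. by move=> H; rewrite /relu /Num.max /Order.max; case: ifP => // H'; lra. Qed.
Lemma relu_ge0 (y : R) : 0 <= relu y.
Proof. by rewrite /relu le_max lexx orbT. Qed.
Lemma relu_ge (y : R) : y <= relu y.
Proof. by rewrite /relu le_max lexx. Qed.
Lemma relu_case (y : R) : (0 <= y /\ relu y = y) \/ (y < 0 /\ relu y = 0).
Proof. case: (lerP 0 y) => H; [left; split => //; exact: relu_id| right; split => //; apply: relu_neg; exact: ltW]. Qed.
Lemma min_case (x y : R) : (x <= y /\ Num.min x y = x) \/ (y < x /\ Num.min x y = y).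
Proof. rewrite /Num.min /Order.min; case: (lerP x y) => H; [left|right]; split => //; case: ifP => //; lra. Qed.

Lemma cases_m (z c : R) : Num.min (relu z) (relu c) = 0 \/ Num.min (relu z) (relu c) = relu c \/
   (Num.min (relu z) (relu c) = z /\ 0 <= z /\ z <= relu c).
Proof.
have Hc := relu_ge0 c. move: Hc.
rewrite /relu /Num.min /Num.max /Order.min /Order.max;
repeat case: ifP; move=> *;
first [left; lra | right; left; lra | right; right; (split; [lra|split; lra])].
Qed.

Lemma relu_bounds (y a d : R) : 0 < a - d -> `|relu y - a| < d -> a - d < y /\ y < a + d.
Proof.
move=> Ha; rewrite ltr_distlC => /andP [H1 H2].
case: (relu_case y) => [[Hy E]|[Hy E]]; rewrite E in H1 H2; lra.
Qed.
End C.
Section F. Variable R : realFieldType.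
Lemma family (w2 W b1 b2 c d beta : R) (i0 : nat) :
  0 < d -> d < 1/20 -> (2*(i0+4))%:R <= beta ->
  (forall i, (i0 < i <= i0+4)%N ->
    `|relu (w2 * Num.min (relu (W * (2*i)%:R + b1)) (relu c) + b2) - Num.min ((2*i)%:R) beta| < d) ->
  exists ak, exists al, [/\ (2*i0)%:R + 2 <= ak, ak + 2 <= al, al <= (2*i0)%:R + 8,
     [/\ ak - d < (w2*W)*ak + (w2*b1+b2), (w2*W)*ak + (w2*b1+b2) < ak + d,
         al - d < (w2*W)*al + (w2*b1+b2) & (w2*W)*al + (w2*b1+b2) < al + d] &
     [/\ 0 <= W*ak + b1, W*ak + b1 <= relu c & 0 <= W*al + b1]].
Proof.
move=> Hd Hd1 Hb H.
set A : R := (2*i0)%:R.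
have HA : 0 <= A by rewrite /A ler0n.
have Ej : forall j, (2*(i0+j))%:R = A + (2*j)%:R :> R by move=> j; rewrite mulnDr natrD.
have Hmin : forall j, (j <= 4)%N -> Num.min ((2*(i0+j))%:R) beta = (2*(i0+j))%:R :> R.
  move=> j Hj; rewrite /Num.min /Order.min; case: ifP => // /negbT; rewrite -leNgt => H'.
  apply/eqP; rewrite eq_le H' /= (le_trans _ Hb) // ler_nat leq_mul2l /= leq_add2l //.
pose m j := Num.min (relu (W * (2*(i0+j))%:R + b1)) (relu c).
have Hj : forall j, (0 < j <= 4)%N -> (A + (2*j)%:R) - d < w2 * m j + b2 /\ w2 * m j + b2 < (A + (2*j)%:R) + d.
  move=> j /andP [Hj1 Hj2]; rewrite -Ej; apply: relu_bounds.
    rewrite Ej; have : (2 <= (2*j)%:R :> R) by rewrite (ler_nat R 2); lia.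
    lra.
  rewrite -[X in `|_ - X|](Hmin j Hj2); apply: H; lia.
have C : forall j, m j = 0 \/ m j = relu c \/
   (m j = W * (2*(i0+j))%:R + b1 /\ 0 <= W * (2*(i0+j))%:R + b1 /\ W * (2*(i0+j))%:R + b1 <= relu c).
  by move=> j; apply: cases_m.
have [B1 B1'] := Hj 1%N isT; have [B2 B2'] := Hj 2%N isT;
have [B3 B3'] := Hj 3%N isT; have [B4 B4'] := Hj 4%N isT.
have Hd' : d < 1 by lra.
have X1 : A + 2 - d < w2 * m 1%N + b2 by lra.
have Y1 : w2 * m 1%N + b2 < A + 2 + d by lra.
have X2 : A + 2 + 2 - d < w2 * m 2%N + b2 by lra.
have Y2 : w2 * m 2%N + b2 < A + 2 + 2 + d by lra.
have X3 : A + 2 + 4 - d < w2 * m 3%N + b2 by lra.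
have Y3 : w2 * m 3%N + b2 < A + 2 + 4 + d by lra.
have X4 : A + 2 + 6 - d < w2 * m 4%N + b2 by lra.
have Y4 : w2 * m 4%N + b2 < A + 2 + 6 + d by lra.
have := @pick4 R (fun x => w2*x+b2) (relu c) d (A+2) _ _ _ _ _ _ _ _ Hd Hd' X1 Y1 X2 Y2 X3 Y3 X4 Y4 (C 1%N) (C 2%N) (C 3%N) (C 4%N).
rewrite !Ej.
clear B1 B1' B2 B2' B3 B3' B4 B4' H Hj C Hmin.
have E : forall (a : R), w2 * (W * a + b1) + b2 = (w2*W)*a + (w2*b1+b2) by move=> a; ring.
move=> P; case: P => [P|[P|[P|[P|[P|P]]]]]; move: P => [[Mk [Gk1 Gk2]] [Ml [Gl1 Gl2]]].
- exists (A + (2*1)%:R), (A + (2*2)%:R); split; try lra.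
    by split; rewrite -E; [rewrite -Mk|rewrite -Mk|rewrite -Ml|rewrite -Ml]; lra.
  by split.
- exists (A + (2*1)%:R), (A + (2*3)%:R); split; try lra.
    by split; rewrite -E; [rewrite -Mk|rewrite -Mk|rewrite -Ml|rewrite -Ml]; lra.
  by split.
- exists (A + (2*1)%:R), (A + (2*4)%:R); split; try lra.
    by split; rewrite -E; [rewrite -Mk|rewrite -Mk|rewrite -Ml|rewrite -Ml]; lra.
  by split.
- exists (A + (2*2)%:R), (A + (2*3)%:R); split; try lra.
    by split; rewrite -E; [rewrite -Mk|rewrite -Mk|rewrite -Ml|rewrite -Ml]; lra.
  by split.
- exists (A + (2*2)%:R), (A + (2*4)%:R); split; try lra.
    by split; rewrite -E; [rewrite -Mk|rewrite -Mk|rewrite -Ml|rewrite -Ml]; lra.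
  by split.
- exists (A + (2*3)%:R), (A + (2*4)%:R); split; try lra.
    by split; rewrite -E; [rewrite -Mk|rewrite -Mk|rewrite -Ml|rewrite -Ml]; lra.
  by split.
Qed.

End F.
Section P3. Variable R : realFieldType.
Lemma relu_le (y K : R) : y <= K -> 0 <= K -> relu y <= K.
Proof. by move=> *; rewrite /relu /Num.max /Order.max; case: ifP. Qed.

Lemma ew_ge0 (G : graph R) (u v : V G) : attributed G -> u \in nbhd v -> 0 <= ew u v.
Proof.
move=> [_ He _]; rewrite /ew /ew_of; case: eqP => // Hne.
rewrite inE => /orP [/eqP //|H]; exact: He.
Qed.

Lemma part3 (w2 W11 W12 b1 b2 eps : R) (G : graph R) (v : V G) : attributed G -> 0 <= w2 ->
  0 < eps -> eps < 1 ->
  1 - eps <= w2*W11 -> w2*W11 <= 1 + eps -> 1 - eps <= w2*W12 -> w2*W12 <= 1 + eps ->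
  -eps <= w2*b1+b2 -> w2*b1+b2 <= eps -> b2 <= eps ->
  (1 - eps) * @xv R (Gamma G) v - eps <= gnn w2 W11 W12 b1 b2 v /\
  gnn w2 W11 W12 b1 b2 v <= (1 + eps) * @xv R (Gamma G) v + eps.
Proof.
move=> HG Hw He0 He1 Hq1 Hq2 Hp1 Hp2 Hr1 Hr2 Hb2.
have Hx : forall u : V G, 0 <= @xv R G u by case: HG.
rewrite gnn_def Gamma_xv.
set g := fun u => relu (W11 * @xv R G u + W12 * ew u v + b1).
set f := fun u => @xv R G u + ew u v.
have Hf : forall u, u \in nbhd v -> 0 <= f u.
  by move=> u Hu; rewrite /f addr_ge0 // ew_ge0.
split.
  have [u1 Hu1 ->] := minN_ex v g.
  have HT := minN_le f Hu1.
  have Hxu := Hx u1; have Heu := ew_ge0 HG Hu1.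
  have Hg : w2 * (W11 * @xv R G u1 + W12 * ew u1 v + b1) <= w2 * g u1.
    by apply: ler_wpM2l => //; rewrite /g relu_ge.
  have H1 : (1 - eps) * minN v f <= (1 - eps) * f u1 by apply: ler_wpM2l => //; lra.
  have H2 : 0 <= (w2*W11 - (1 - eps)) * @xv R G u1 by apply: mulr_ge0 => //; lra.
  have H3 : 0 <= (w2*W12 - (1 - eps)) * ew u1 v by apply: mulr_ge0 => //; lra.
  apply: (le_trans _ (relu_ge (w2 * g u1 + b2))); rewrite /f in H1 *; nra.
have [u2 Hu2 ->] := minN_ex v f.
have HM := minN_le g Hu2.
have Hxu := Hx u2; have Heu := ew_ge0 HG Hu2.
have Hfu := Hf u2 Hu2.
have H0' : 0 <= (1 + eps) * f u2 by apply: mulr_ge0 => //; lra.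
have H0 : 0 <= (1 + eps) * f u2 + eps by lra.
apply: relu_le => //.
have HM' : w2 * minN v g <= w2 * g u2 by apply: ler_wpM2l.
suff Hup : w2 * g u2 + b2 <= (1+eps)*f u2 + eps by lra.
rewrite /g; case: (relu_case (W11 * @xv R G u2 + W12 * ew u2 v + b1)) => [[Hz ->]|[Hz ->]].
  have H2 : 0 <= (1 + eps - w2*W11) * @xv R G u2 by apply: mulr_ge0 => //; lra.
  have H3 : 0 <= (1 + eps - w2*W12) * ew u2 v by apply: mulr_ge0 => //; lra.
  rewrite /f; nra.
rewrite mulr0 add0r; lra.
Qed.
End P3.

Section Pair.
Variable R : realFieldType.
Lemma pairA (p r d ak al : R) : 0 < d -> ak + 2 <= al -> 0 <= ak ->
  ak - d < p*ak + r -> p*ak + r < ak + d -> al - d < p*al + r -> p*al + r < al + d ->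
  1 - d < p.
Proof. move=> *. nra. Qed.
Lemma pairB (p r d ak al : R) : 0 < d -> ak + 2 <= al -> 0 <= ak ->
  ak - d < p*ak + r -> p*ak + r < ak + d -> al - d < p*al + r -> p*al + r < al + d ->
  p < 1 + d.
Proof. move=> *. nra. Qed.
Lemma pairC (p r d ak : R) : 0 < d -> 0 <= ak ->
  ak - d < p*ak + r -> p*ak + r < ak + d -> 1 - d < p -> p < 1 + d ->
  r < (ak + 1) * d /\ - ((ak + 1) * d) < r.
Proof. move=> *. split; nra. Qed.
End Pair.

Theorem theorem1 (R : realFieldType) (beta eps w2 W11 W12 b1 b2 : R) :
  0 < beta ->
  (forall i : nat, (1 <= i <= 4)%N -> inGG beta (Hsmall1 beta i)) ->
  (forall i : nat, (5 <= i <= 8)%N -> inGG beta (Hsmall2 beta i)) ->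
  0 < eps -> eps < 1 ->
  (forall i : nat, (1 <= i <= 4)%N -> fits eps w2 W11 W12 b1 b2 (Hsmall1 beta i)) ->
  (forall i : nat, (5 <= i <= 8)%N -> fits eps w2 W11 W12 b1 b2 (Hsmall2 beta i)) ->
  [/\ `|w2 * W11 - 1| + `|w2 * W12 - 1| < eps /\ `|w2 * b1 + b2| < 20%:R * eps,
      [/\ 0 <= w2, 0 <= W11 & 0 <= W12] &
      forall (G : graph R), inGG beta G -> forall v : V G,
        (1 - eps) * @xv R (Gamma G) v - eps <= gnn w2 W11 W12 b1 b2 v /\
        gnn w2 W11 W12 b1 b2 v <= (1 + eps) * @xv R (Gamma G) v + eps].
Proof.
move=> Hb HG1 HG2 He0 He1 HF1 HF2.
set d := eps / 20%:R.
have Hd0 : 0 < d by rewrite /d; lra.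
have Hd1 : d < 1/20 by rewrite /d; lra.
have Hb16 : 16 < beta.
  have [[_ Hnn _] Hsum] := HG2 8%N isT.
  move: Hsum; rewrite (bigD1 [set (inord 0 : 'I_3); inord 1]) /=; last first.
    by rewrite path_edgeP !val_inord.
  rewrite (@path_xe_edge R 2 _ 0) //=.
  set S := \sum_(_ | _) _.
  have : 0 <= S by apply: sumr_ge0 => e /andP [He _]; apply: Hnn.
  lra.
have FA := @family R w2 W12 b1 b2 (W11*beta + b1) d beta 0 Hd0 Hd1.
have FB := @family R w2 W11 b1 b2 (W11*beta + b1) d beta 4 Hd0 Hd1.
have [ak [al [Ha1 Ha2 Ha3 [P1 P2 P3 P4] [G1 G2 G3]]]] : _ := FA ltac:(lra) (fun i Hi =>
  match H1_v1 beta i w2 W11 W12 b1 b2 with conj E1 E2 =>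
    eq_ind _ (fun z => `|z - _| < d) (eq_ind _ (fun z => `|_ - z| < d) (HF1 i Hi (inord 1)) _ E2) _ E1 end).
have [bk [bl [Hc1 Hc2 Hc3 [Q1 Q2 Q3 Q4] _]]] : _ := FB ltac:(lra) (fun i Hi =>
  match H2_v2 beta i w2 W11 W12 b1 b2 with conj E1 E2 =>
    eq_ind _ (fun z => `|z - _| < d) (eq_ind _ (fun z => `|_ - z| < d) (HF2 i Hi (inord 2)) _ E2) _ E1 end).
clear FA FB.
have Hak : 0 <= ak by lra.
have Hbk : 0 <= bk by lra.
have Hp1 := pairA Hd0 Ha2 Hak P1 P2 P3 P4.
have Hp2 := pairB Hd0 Ha2 Hak P1 P2 P3 P4.
have [Hr1 Hr2] := pairC Hd0 Hak P1 P2 Hp1 Hp2.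
have Hq1 := pairA Hd0 Hc2 Hbk Q1 Q2 Q3 Q4.
have Hq2 := pairB Hd0 Hc2 Hbk Q1 Q2 Q3 Q4.
have Hak6 : 0 <= (6 - ak) * d by apply: mulr_ge0; lra.
have Hw : 0 <= w2.
  apply: (@signA R w2 W11 W12 b1 d beta ak al) => //; lra.
have HW11 : 0 <= W11 by nra.
have HW12 : 0 <= W12 by nra.
have Hb2 : b2 < d.
  have [Hb2a Hb2b] := @H1_v0 R beta 1%N w2 W11 W12 b1 b2 Hw.
  have Hf := HF1 1%N isT (inord 0).
  move: Hf; rewrite ltr_norml -/d => /andP [Hf1 Hf2].
  lra.
split.
- split.
    have Nq : `|w2*W11 - 1| < d by rewrite ltr_norml; apply/andP; split; lra.
    have Np : `|w2*W12 - 1| < d by rewrite ltr_norml; apply/andP; split; lra.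
    rewrite /d in Nq Np; lra.
  rewrite ltr_norml; apply/andP; split; rewrite /d in Hr1 Hr2 Hak6 *; lra.
- by split.
move=> G [HGa _] v; apply: part3 => //; rewrite /d in Hr1 Hr2 Hak6 Hp1 Hp2 Hq1 Hq2 Hb2 *; lra.
Qed.
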